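(* Let $\mathcal A$ be a commutative semiring and $\mathcal W$ a semialgebra over $\mathcal A$ with a surpassing relation $\preceq$, and suppose $\mathcal W$ is affine over $\mathcal A$. Let $\mathcal K\subseteq\mathcal W$ be a central sub-semialgebra containing $\mathcal A$ such that $\mathcal W$ has a finite $\preceq$-base $B$ over $\mathcal K$. Then $\mathcal K$ is affine over $\mathcal A$.
   Context: A surpassing relation is a partial preorder $\preceq$ compatible with addition and with multiplication by elements. For a sub-semialgebra $\mathcal K$ containing $\mathcal A$ and $y_1,\dots,y_n$, $\mathcal A[y_1,\dots,y_n]$ denotes the $\mathcal A$-sub-semialgebra they generate. $\mathcal W$ (resp. $\mathcal K$) is affine over $\mathcal A$ if there are finitely many $y_1,\dots,y_n\in\mathcal W$ (resp. in $\mathcal K$) such that for every $w\in\mathcal W$ (resp. $w\in\mathcal K$) there is $w'\in\mathcal A[y_1,\dots,y_n]$ with $w'\preceq w$. $\mathcal K$ is central if $kw=wk$ for all $k\in\mathcal K$, $w\in\mathcal W$. A set $B$ $\preceq$-spans $\mathcal W$ over $\mathcal K$ if every $v\in\mathcal W$ satisfies $\sum_i k_ib_i\preceq v$ for some $k_i\in\mathcal K$, $b_i\in B$; $B$ is $\preceq$-independent over $\mathcal K$ if for distinct $b_i\in B$, $\sum k_ib_i\preceq\sum k_i'b_i$ with $k_i,k_i'\in\mathcal K$ implies $k_i\preceq k_i'$ for all $i$; a $\preceq$-base over $\mathcal K$ is a $\preceq$-independent $\preceq$-spanning set. *)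

(* Defs.v *)
From HB Require Import structures.
From mathcomp Require Import all_boot all_order all_algebra.
Set Implicit Arguments. Unset Strict Implicit. Unset Printing Implicit Defensive.
Import GRing.Theory.
Local Open Scope ring_scope.

Section Surpassing.
Variables (A : comPzSemiRingType) (W : semiAlgType A).

Definition surpassing (le : W -> W -> Prop) : Prop :=
  [/\ (forall x, le x x),
      (forall x y z, le x y -> le y z -> le x z),
      (forall x y c, le x y -> le (x + c) (y + c)),
      (forall x y c, le x y -> le (c * x) (c * y)) &
      (forall x y c, le x y -> le (x * c) (y * c))].

Definition subsemialg (K : W -> Prop) : Prop :=
  [/\ K 0, K 1,
      (forall x y, K x -> K y -> K (x + y)),
      (forall x y, K x -> K y -> K (x * y)) &
      (forall (a : A) x, K x -> K (a *: x))].

Definition contains_A (K : W -> Prop) : Prop := forall a : A, K (a%:A).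

Definition central (K : W -> Prop) : Prop :=
  forall k w, K k -> k * w = w * k.

Inductive gen_subsemialg (ys : seq W) : W -> Prop :=
  | gen_y : forall y, y \in ys -> gen_subsemialg ys y
  | gen_A : forall a : A, gen_subsemialg ys (a%:A)
  | gen_add : forall x y, gen_subsemialg ys x -> gen_subsemialg ys y ->
      gen_subsemialg ys (x + y)
  | gen_mul : forall x y, gen_subsemialg ys x -> gen_subsemialg ys y ->
      gen_subsemialg ys (x * y)
  | gen_scale : forall (a : A) x, gen_subsemialg ys x ->
      gen_subsemialg ys (a *: x).

Definition affine_over (le : W -> W -> Prop) (S : W -> Prop) : Prop :=
  exists ys : seq W, (forall y, y \in ys -> S y) /\
    forall w, S w -> exists2 w', gen_subsemialg ys w' & le w' w.

Definition le_spans (le : W -> W -> Prop) (K : W -> Prop) n (b : 'I_n -> W) :=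
  forall v : W, exists k : 'I_n -> W,
    (forall i, K (k i)) /\ le (\sum_(i < n) k i * b i) v.

Definition le_independent (le : W -> W -> Prop) (K : W -> Prop) n
    (b : 'I_n -> W) :=
  forall k k' : 'I_n -> W, (forall i, K (k i)) -> (forall i, K (k' i)) ->
    le (\sum_(i < n) k i * b i) (\sum_(i < n) k' i * b i) ->
    forall i, le (k i) (k' i).

Definition le_base (le : W -> W -> Prop) (K : W -> Prop) n (b : 'I_n -> W) :=
  [/\ injective b, le_spans le K b & le_independent le K b].

End Surpassing.

(* Main.v *)
Require Import Defs.
From HB Require Import structures.
From mathcomp Require Import all_boot all_order all_algebra.
From Stdlib Require Import ClassicalEpsilon.
Set Implicit Arguments. Unset Strict Implicit. Unset Printing Implicit Defensive.
Import GRing.Theory.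
Local Open Scope ring_scope.

Section Helpers.
Variables (A : comPzSemiRingType) (W : semiAlgType A) (le : W -> W -> Prop).
Hypothesis Hs : surpassing le.

Lemma leT x y z : le x y -> le y z -> le x z.
Proof. by case: Hs => _ H _ _ _; apply: H. Qed.
Lemma leR x : le x x.
Proof. by case: Hs. Qed.
Lemma leD x y x' y' : le x y -> le x' y' -> le (x + x') (y + y').
Proof.
case: Hs => _ _ H _ _ h1 h2; apply: (leT (H _ _ x' h1)).
by rewrite ![y + _]addrC; apply: H.
Qed.
Lemma leMl c x y : le x y -> le (c * x) (c * y).
Proof. by case: Hs => _ _ _ H _; apply: H. Qed.
Lemma leM x y x' y' : le x y -> le x' y' -> le (x * x') (y * y').
Proof.
case: Hs => _ _ _ H1 H2 h1 h2; apply: (leT (H2 _ _ x' h1)).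
by apply: H1.
Qed.
Lemma leZ (a : A) x y : le x y -> le (a *: x) (a *: y).
Proof. by move=> h; rewrite -[x]mul1r -[y]mul1r !scalerAl; apply: leMl. Qed.
Lemma leSum n (F G : 'I_n -> W) : (forall i, le (F i) (G i)) ->
  le (\sum_(i < n) F i) (\sum_(i < n) G i).
Proof.
move=> h; apply: (big_ind2 le) => //; first exact: leR.
by move=> *; apply: leD.
Qed.
End Helpers.

Lemma gen0 (A : comPzSemiRingType) (W : semiAlgType A) (ys : seq W) :
  gen_subsemialg ys 0.
Proof. by have := gen_A ys 0; rewrite scale0r. Qed.

Lemma genSum (A : comPzSemiRingType) (W : semiAlgType A) (ys : seq W) n
  (F : 'I_n -> W) : (forall i, gen_subsemialg ys (F i)) ->
  gen_subsemialg ys (\sum_(i < n) F i).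
Proof.
move=> h; apply: (big_ind (gen_subsemialg ys)) => //; first exact: gen0.
by move=> *; apply: gen_add.
Qed.

Theorem mainTheorem10 (A : comPzSemiRingType) (W : semiAlgType A)
  (le : W -> W -> Prop) (K : W -> Prop) :
  surpassing le ->
  affine_over le (fun _ : W => True) ->
  subsemialg K -> contains_A K -> central K ->
  (exists (n : nat) (b : 'I_n -> W), le_base le K b) ->
  affine_over le K.
Proof.
move=> Hs [Y [_ HY]] Hsub HA Hc [n [b [_ Hspan Hind]]].
have [cf hcf] : exists cf : W -> 'I_n -> W, forall v,
    (forall i, K (cf v i)) /\ le (\sum_(i < n) cf v i * b i) v.
  exists (fun v => proj1_sig (constructive_indefinite_description _ (Hspan v))).
  by move=> v; exact: (proj2_sig (constructive_indefinite_description _ (Hspan v))).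
pose V := 1 :: Y ++ [seq b i * b j | i <- enum 'I_n, j <- enum 'I_n].
pose ys := [seq cf v i | v <- V, i <- enum 'I_n].
have ysK : forall y, y \in ys -> K y.
  by move=> y /allpairsP [[v i] [_ _ ->]]; case: (hcf v).
have cfys : forall v i, v \in V -> gen_subsemialg ys (cf v i).
  by move=> v i hv; apply: gen_y; apply/allpairsP; exists (v, i); rewrite mem_enum.
have genK : forall x, gen_subsemialg ys x -> K x.
  case: Hsub => _ _ Hadd Hmul Hsc.
  move=> x; elim=> [y /ysK //|a|{}x y _ ? _ ?|{}x y _ ? _ ?|a {}x _ ?]; by auto.
have key : forall w, gen_subsemialg Y w -> exists e : 'I_n -> W,
    (forall i, gen_subsemialg ys (e i)) /\ le (\sum_(i < n) e i * b i) w.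
  move=> w; elim.
  - move=> y hy; exists (cf y); split; last by case: (hcf y).
    by move=> i; apply: cfys; rewrite inE mem_cat hy orbT.
  - move=> a; exists (fun i => a *: cf 1 i); split.
      by move=> i; apply: gen_scale; apply: cfys; rewrite inE eqxx.
    under eq_bigr do rewrite -scalerAl.
    rewrite -scaler_sumr; apply: (leZ Hs); by case: (hcf 1).
  - move=> x y _ [e1 [g1 l1]] _ [e2 [g2 l2]]; exists (fun i => e1 i + e2 i); split.
      by move=> i; apply: gen_add.
    under eq_bigr do rewrite mulrDl.
    by rewrite big_split /=; apply: (leD Hs).
  - move=> x y _ [e1 [g1 l1]] _ [e2 [g2 l2]].
    exists (fun l => \sum_(i < n) \sum_(j < n) e1 i * e2 j * cf (b i * b j) l).
    split.
      move=> l; apply: genSum => i; apply: genSum => j.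
      apply: gen_mul; first exact: gen_mul.
      apply: cfys; rewrite inE mem_cat; apply/orP; right; apply/orP; right.
      by apply/allpairsP; exists (i, j); rewrite !mem_enum.
    apply: (leT Hs _ (leM Hs l1 l2)).
    have -> : (\sum_(i < n) e1 i * b i) * (\sum_(j < n) e2 j * b j) =
        \sum_(i < n) \sum_(j < n) e1 i * e2 j * (b i * b j).
      rewrite mulr_suml; apply: eq_bigr => i _; rewrite mulr_sumr.
      apply: eq_bigr => j _.
      rewrite -!mulrA (mulrA (b i)) -(Hc _ _ (genK _ (g2 j))) !mulrA.
      by [].
    have -> : \sum_(l < n) (\sum_(i < n) \sum_(j < n) e1 i * e2 j * cf (b i * b j) l) * b l =
        \sum_(i < n) \sum_(j < n) e1 i * e2 j * (\sum_(l < n) cf (b i * b j) l * b l).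
      under eq_bigr do rewrite mulr_suml.
      rewrite exchange_big; apply: eq_bigr => i _.
      under eq_bigr do rewrite mulr_suml.
      rewrite exchange_big; apply: eq_bigr => j _.
      rewrite mulr_sumr; apply: eq_bigr => l _; by rewrite mulrA.
    apply: (leSum Hs) => i; apply: (leSum Hs) => j; apply: (leMl Hs).
    by case: (hcf (b i * b j)).
  - move=> a x _ [e [g l]]; exists (fun i => a *: e i); split.
      by move=> i; apply: gen_scale.
    under eq_bigr do rewrite -scalerAl.
    by rewrite -scaler_sumr; apply: (leZ Hs).
case: n b Hspan Hind cf hcf V ys ysK cfys genK key => [|n] b Hspan Hind cf hcf V ys ysK cfys genK key.
  exists ys; split=> // w _; exists 0; first exact: gen0.
  by case: (Hspan w) => k [_]; rewrite big_ord0.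
exists ys; split=> // k Hk.
have [w' gw' lw'] := HY (k * b ord0) I.
have [e [ge le']] := key _ gw'.
exists (e ord0); first exact: ge.
pose k' := fun l : 'I_n.+1 => if l == ord0 then k else 0.
have Kk' : forall l, K (k' l).
  by move=> l; rewrite /k'; case: ifP => // _; case: Hsub.
have := Hind e k' (fun i => genK _ (ge i)) Kk'.
move=> H; have {H} := H _ ord0; rewrite /k' eqxx; apply.
apply: (leT Hs le'); apply: (leT Hs lw').
rewrite (bigD1 ord0) //= big1 ?addr0; first exact: leR.
by move=> i /negPf ->; rewrite mul0r.
Qed.
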